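(* Let $ABC$ be a triangle with incenter $I$ and circumcenter $O$, and let $H_A, H_B, H_C$ be the orthocenters of the triangles $BIC$, $CIA$, $AIB$ respectively. Let $O_A, O_B, O_C$ be the circumcenters of the triangles $AH_BH_C$, $BH_CH_A$, $CH_AH_B$ respectively. Then the circumcenter of triangle $O_AO_BO_C$ is the reflection of $O$ in $I$. *)

(* Defs.v *)
From mathcomp Require Import all_boot all_order all_algebra.
Set Implicit Arguments. Unset Strict Implicit. Unset Printing Implicit Defensive.
Import Order.TTheory GRing.Theory Num.Theory.
Local Open Scope ring_scope.

Section Plane.
Variable R : rcfType.
Definition point := (R * R)%type.

Definition padd (P Q : point) : point := (P.1 + Q.1, P.2 + Q.2).
Definition psub (P Q : point) : point := (P.1 - Q.1, P.2 - Q.2).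
Definition pscale (k : R) (P : point) : point := (k * P.1, k * P.2).
Definition dot (u v : point) : R := u.1 * v.1 + u.2 * v.2.
Definition cross (u v : point) : R := u.1 * v.2 - u.2 * v.1.
Definition sqdist (P Q : point) : R := dot (psub P Q) (psub P Q).

Definition triangle (A B C : point) : Prop := cross (psub B A) (psub C A) != 0.

Definition sqdist_line (P Q S : point) : R :=
  (cross (psub Q P) (psub S P)) ^+ 2 / sqdist Q S.

Definition strictly_inside (P A B C : point) : Prop :=
  exists a b c : R, [/\ 0 < a, 0 < b, 0 < c, a + b + c = 1 &
    P = padd (pscale a A) (padd (pscale b B) (pscale c C))].

Definition is_incenter (I A B C : point) : Prop :=
  [/\ triangle A B C, strictly_inside I A B C,
      sqdist_line I B C = sqdist_line I C A &
      sqdist_line I C A = sqdist_line I A B].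

Definition is_circumcenter (O A B C : point) : Prop :=
  [/\ triangle A B C, sqdist O A = sqdist O B & sqdist O B = sqdist O C].

Definition is_orthocenter (H A B C : point) : Prop :=
  [/\ triangle A B C, dot (psub H A) (psub B C) = 0 &
      dot (psub H B) (psub C A) = 0].

Definition reflect_pt (P Q : point) : point := psub (pscale 2 Q) P.
End Plane.

(* Main.v *)
Require Import Defs.
From mathcomp Require Import all_boot all_order all_algebra.
From mathcomp Require Import ring lra.
Import Order.TTheory GRing.Theory Num.Theory.
Local Open Scope ring_scope.
Ltac fld := field; try done; repeat (apply/andP; split); try assumption; try (by rewrite pnatr_eq0).
Section S.
Variable R : rcfType.

Lemma lin0 (P Q k : R) : Q = 0 -> P = k * Q -> P = 0.
Proof. by move=> -> ->; rewrite mulr0. Qed.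

Lemma neqk (x y k : R) : x != 0 -> x = k * y -> y != 0.
Proof. by move=> h e; apply: contra_neq h => h0; rewrite e h0 mulr0. Qed.

Lemma sqd0 (x1 x2 y1 y2 : R) :
  (x1-y1)*(x1-y1) + (x2-y2)*(x2-y2) = 0 -> x1 = y1 /\ x2 = y2.
Proof.
move/eqP; rewrite -!expr2 paddr_eq0 ?sqr_ge0 // !sqrf_eq0 !subr_eq0.
by case/andP => /eqP -> /eqP ->.
Qed.

Lemma divEq (n1 d1 n2 d2 : R) : d1 != 0 -> d2 != 0 -> n1/d1 = n2/d2 -> n1*d2 = n2*d1.
Proof. by move=> h1 h2 /eqP; rewrite eqr_div // => /eqP. Qed.

Lemma uniq2 (x1 x2 f1 f2 g1 g2 : R) : f1*g2 - f2*g1 != 0 ->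
  x1*f1 + x2*f2 = 0 -> x1*g1 + x2*g2 = 0 -> x1 = 0 /\ x2 = 0.
Proof.
move=> hd h1 h2; split.
- apply/eqP; rewrite -(mulIr_eq0 _ (mulIf hd)); apply/eqP.
  apply: (lin0 _ _ g2 h1); apply/eqP; rewrite -subr_eq0; apply/eqP.
  apply: (lin0 _ _ (-f2) h2); ring.
- apply/eqP; rewrite -(mulIr_eq0 _ (mulIf hd)); apply/eqP.
  apply: (lin0 _ _ (-g1) h1); apply/eqP; rewrite -subr_eq0; apply/eqP.
  apply: (lin0 _ _ (f1) h2); ring.
Qed.

Lemma solve_uniq (x1 x2 y1 y2 z1 z2 f1 f2 g1 g2 c1 c2 : R) :
 (x1 - y1)*f1 + (x2 - y2)*f2 = 0 -> (x1 - z1)*g1 + (x2 - z2)*g2 = 0 ->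
 (c1 - y1)*f1 + (c2 - y2)*f2 = 0 -> (c1 - z1)*g1 + (c2 - z2)*g2 = 0 ->
 f1*g2 - f2*g1 != 0 -> x1 = c1 /\ x2 = c2.
Proof.
move=> h1 h2 h3 h4 hd.
have [] := uniq2 (x1 - c1) (x2 - c2) f1 f2 g1 g2 hd.
- apply: (lin0 _ _ 1 h1); apply/eqP; rewrite -subr_eq0; apply/eqP.
  apply: (lin0 _ _ (-1) h3); ring.
- apply: (lin0 _ _ 1 h2); apply/eqP; rewrite -subr_eq0; apply/eqP.
  apply: (lin0 _ _ (-1) h4); ring.
by move=> /subr0_eq -> /subr0_eq ->.
Qed.
Lemma sq2_neq0 (x1 x2 y1 y2 : R) : x1*y2 - x2*y1 != 0 ->
  (x1 - y1)^+2 + (x2 - y2)^+2 != 0.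
Proof.
move=> h; apply/negP => /eqP.
move/eqP; rewrite paddr_eq0 ?sqr_ge0 // !sqrf_eq0 !subr_eq0 => /andP[/eqP e1 /eqP e2].
by move: h; rewrite e1 e2 mulrC subrr eqxx.
Qed.

Lemma param (a1 a2 c1 c2 : R) : c1*a2 - c2*a1 != 0 ->
 exists e1 e2 u t, [/\ e1^+2 + e2^+2 != 0, a1 = e1 - u*e2, a2 = e2 + u*e1,
   c1 = e1 - t*e2 & c2 = e2 + t*e1].
Proof.
move=> h.
have hd : (a1 - c1)^+2 + (a2 - c2)^+2 != 0.
  by apply: sq2_neq0; move: h; apply: contra_neq => h; rewrite -[LHS]opprK; apply/eqP; rewrite oppr_eq0; apply/eqP; rewrite -h; ring.
set d := (a1 - c1)^+2 + (a2 - c2)^+2 in hd.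
pose s := - (c1*(a1-c1) + c2*(a2-c2)) / d.
pose e1 := c1 + s*(a1-c1). pose e2 := c2 + s*(a2-c2).
have hr : e1^+2 + e2^+2 = (c1*a2 - c2*a1)^+2 / d.
  by rewrite /e1 /e2 /s /d; fld.
have F1 : e1*a1 + e2*a2 - (e1^+2 + e2^+2) = 0 by rewrite /e1 /e2 /s /d; fld.
have F2 : e1*c1 + e2*c2 - (e1^+2 + e2^+2) = 0 by rewrite /e1 /e2 /s /d; fld.
have hr0 : e1^+2 + e2^+2 != 0.
  by rewrite hr mulf_neq0 ?invr_eq0 // expf_neq0.
clearbody e1 e2; clear hr.
set r := e1^+2 + e2^+2 in hr0 F1 F2 *.
exists e1, e2, ((e1*a2 - e2*a1)/r), ((e1*c2 - e2*c1)/r); split; first exact: hr0.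
- apply/subr0_eq; apply: (lin0 _ _ (e1/r) F1); move: hr0; rewrite /r => hr0; fld.
- apply/subr0_eq; apply: (lin0 _ _ (e2/r) F1); move: hr0; rewrite /r => hr0; fld.
- apply/subr0_eq; apply: (lin0 _ _ (e1/r) F2); move: hr0; rewrite /r => hr0; fld.
- apply/subr0_eq; apply: (lin0 _ _ (e2/r) F2); move: hr0; rewrite /r => hr0; fld.
Qed.

Lemma eq_sub0 {x y : R} : x = y -> x - y = 0.
Proof. by move=> ->; rewrite subrr. Qed.

Lemma div_eq_r {n d r : R} : d != 0 -> n / d = r -> n - r * d = 0.
Proof. by move=> hd <-; rewrite divfK // subrr. Qed.

Lemma sq1_neq0 (u : R) : 1 + u^+2 != 0.
Proof. have h : 0 < 1 + u^+2 by nra. by rewrite gt_eqF. Qed.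

Lemma key (A B C O HB HC OA : point R) :
  triangle A B C ->
  sqdist_line (0,0) A B = sqdist_line (0,0) C A ->
  sqdist_line (0,0) B C = sqdist_line (0,0) C A ->
  is_circumcenter O A B C ->
  is_orthocenter HB C (0,0) A -> is_orthocenter HC A (0,0) B ->
  is_circumcenter OA A HB HC ->
  sqdist (reflect_pt O (0,0)) OA = sqdist (reflect_pt O (0,0)) (0,0).
Proof.
case: A => a1 a2; case: B=> b1 b2; case: C => c1 c2; case: O => o1 o2.
case: HB => hb1 hb2; case: HC => hc1 hc2; case: OA => q1 q2.
rewrite /triangle /sqdist_line /is_circumcenter /is_orthocenter /sqdist /reflect_pt /dot /cross /psub /pscale /=.
move=> hT hi1 hi2 [_ hO1 hO2] [hTB hB1 hB2] [hTC hC1 hC2] [hTA hA1 hA2].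
move: hTB hTC hTA; rewrite /triangle /cross /psub /= => hTB hTC hTA.
have hdTB : (0 - a1)*(a2 - c2) - (0 - a2)*(a1 - c1) != 0.
  by apply: (neqk _ _ 1 hTB); ring.
have hCA : c1*a2 - c2*a1 != 0 by apply: (neqk _ _ (-1) hTB); ring.
have hdTC : (0 - b1)*(b2 - a2) - (0 - b2)*(b1 - a1) != 0.
  by apply: (neqk _ _ 1 hTC); ring.
have hdO : (b1 - a1)*(c2 - b2) - (b2 - a2)*(c1 - b1) != 0.
  by apply: (neqk _ _ 1 hT); ring.
have hdOA : (hb1 - a1)*(hc2 - hb2) - (hb2 - a2)*(hc1 - hb1) != 0.
  by apply: (neqk _ _ 1 hTA); ring.
have hO1' : (o1 - (a1+b1)/2)*(b1-a1) + (o2 - (a2+b2)/2)*(b2-a2) = 0.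
  apply: (lin0 _ _ (1/2) (eq_sub0 hO1)); fld.
have hO2' : (o1 - (b1+c1)/2)*(c1-b1) + (o2 - (b2+c2)/2)*(c2-b2) = 0.
  apply: (lin0 _ _ (1/2) (eq_sub0 hO2)); fld.
have hA1' : (q1 - (a1+hb1)/2)*(hb1-a1) + (q2 - (a2+hb2)/2)*(hb2-a2) = 0.
  apply: (lin0 _ _ (1/2) (eq_sub0 hA1)); fld.
have hA2' : (q1 - (hb1+hc1)/2)*(hc1-hb1) + (q2 - (hb2+hc2)/2)*(hc2-hb2) = 0.
  apply: (lin0 _ _ (1/2) (eq_sub0 hA2)); fld.
clear hO1 hO2 hA1 hA2 hTA.
have dAB : (a1 - b1) * (a1 - b1) + (a2 - b2) * (a2 - b2) != 0.
  by apply/eqP => /sqd0 [e1 e2]; move/eqP: hTC; apply; rewrite e1 e2; ring.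
have dCA : (c1 - a1) * (c1 - a1) + (c2 - a2) * (c2 - a2) != 0.
  by apply/eqP => /sqd0 [e1 e2]; move/eqP: hTB; apply; rewrite e1 e2; ring.
have dBC : (b1 - c1) * (b1 - c1) + (b2 - c2) * (b2 - c2) != 0.
  by apply/eqP => /sqd0 [e1 e2]; move/eqP: hT; apply; rewrite e1 e2; ring.
have hi1' := div_eq_r dAB hi1.
have hi2' := div_eq_r dBC hi2.
clear hi1 hi2.
set r0 := (_ / ((c1 - a1) * (c1 - a1) + (c2 - a2) * (c2 - a2))) in hi1' hi2'.
have [e1 [e2 [u [t [hr ha1 ha2 hc1' hc2']]]]] := param _ _ _ _ hCA.
subst a1 a2 c1 c2.
have hr0 : r0 = e1^+2 + e2^+2 by rewrite /r0; fld.
clearbody r0; subst r0.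
have htu : t - u != 0 by apply: (neqk _ _ (-(e1^+2+e2^+2)) hCA); ring.
have hBE : b1*e1 + b2*e2 - (e1^+2+e2^+2) != 0 by apply: (neqk _ _ (t-u) hT); ring.
have hF : b1*((1 - u^+2)*e1 - 2*u*e2) + b2*((1-u^+2)*e2 + 2*u*e1) - (1+u^+2)*(e1^+2+e2^+2) = 0.
  have : (b1*e1 + b2*e2 - (e1^+2+e2^+2)) * (b1*((1 - u^+2)*e1 - 2*u*e2) + b2*((1-u^+2)*e2 + 2*u*e1) - (1+u^+2)*(e1^+2+e2^+2)) = 0.
    by apply: (lin0 _ _ (-1) hi1'); ring.
  by move/eqP; rewrite mulf_eq0 (negbTE hBE) /= => /eqP.
have hG : b1*((1 - t^+2)*e1 - 2*t*e2) + b2*((1-t^+2)*e2 + 2*t*e1) - (1+t^+2)*(e1^+2+e2^+2) = 0.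
  have : (b1*e1 + b2*e2 - (e1^+2+e2^+2)) * (b1*((1 - t^+2)*e1 - 2*t*e2) + b2*((1-t^+2)*e2 + 2*t*e1) - (1+t^+2)*(e1^+2+e2^+2)) = 0.
    by apply: (lin0 _ _ (-1) hi2'); ring.
  by move/eqP; rewrite mulf_eq0 (negbTE hBE) /= => /eqP.
have hu2 := sq1_neq0 u.
have ht2 := sq1_neq0 t.
have h1tu : 1 + t*u != 0.
  apply/eqP => h0.
  have : 2 * (1+t^+2) * (1+u^+2) * (e1^+2+e2^+2) = 0.
    have -> : 2 * (1+t^+2) * (1+u^+2) * (e1^+2+e2^+2) =
      2 * (1 + t*u) * (b1 * ((1-t*u)*e1 - (t+u)*e2) + b2 * ((1-t*u)*e2 + (t+u)*e1))
      - (1+t^+2) * (b1*((1 - u^+2)*e1 - 2*u*e2) + b2*((1-u^+2)*e2 + 2*u*e1) - (1+u^+2)*(e1^+2+e2^+2))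
      - (1+u^+2) * (b1*((1 - t^+2)*e1 - 2*t*e2) + b2*((1-t^+2)*e2 + 2*t*e1) - (1+t^+2)*(e1^+2+e2^+2)) by ring.
    by rewrite hF hG h0 !mulr0 mul0r !subr0.
  by apply/eqP; rewrite !mulf_neq0 // pnatr_eq0.
have [eb1 eb2] : b1 - ((1-t*u)*e1 - (t+u)*e2)/(1+t*u) = 0 /\ b2 - ((1-t*u)*e2 + (t+u)*e1)/(1+t*u) = 0.
  apply: (uniq2 _ _ ((1 - u^+2)*e1 - 2*u*e2) ((1-u^+2)*e2 + 2*u*e1) ((1 - t^+2)*e1 - 2*t*e2) ((1-t^+2)*e2 + 2*t*e1)).
  - have -> : ((1 - u^+2)*e1 - 2*u*e2) * ((1-t^+2)*e2 + 2*t*e1) - ((1-u^+2)*e2 + 2*u*e1) * ((1 - t^+2)*e1 - 2*t*e2)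
       = 2 * (e1^+2+e2^+2) * (1 + t*u) * (t - u) by ring.
    by rewrite !mulf_neq0 // pnatr_eq0.
  - by apply: (lin0 _ _ 1 hF); fld.
  - by apply: (lin0 _ _ 1 hG); fld.
move/subr0_eq: eb1 => eb1; move/subr0_eq: eb2 => eb2; subst b1 b2.
have [eh1 eh2] : hb1 = (1+t*u)*e1 /\ hb2 = (1+t*u)*e2.
  by apply: (solve_uniq _ _ _ _ _ _ _ _ _ _ _ _ hB1 hB2) => //; fld.
subst hb1 hb2.
have [eh1 eh2] : hc1 = ((1-u^+2)*e1 - 2*u*e2)/(1+t*u) /\ hc2 = ((1-u^+2)*e2 + 2*u*e1)/(1+t*u).
  by apply: (solve_uniq _ _ _ _ _ _ _ _ _ _ _ _ hC1 hC2) => //; fld.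
subst hc1 hc2.
have [eo1 eo2] : o1 = (3+t^+2+u^+2-t^+2*u^+2)/(4*(1+t*u)) * e1 - (t+u)/2 * e2 /\
                 o2 = (3+t^+2+u^+2-t^+2*u^+2)/(4*(1+t*u)) * e2 + (t+u)/2 * e1.
  by apply: (solve_uniq _ _ _ _ _ _ _ _ _ _ _ _ hO1' hO2') => //; fld.
subst o1 o2.
pose x := (3+t^+2+u^+2-t^+2*u^+2)/(4*(1+t*u)).
pose y := (t+u)/2.
pose m := 2 * (x + y*u) / (1 + u^+2).
have [eq1 eq2] : q1 = m*(e1 - u*e2) - 2*x*e1 + 2*y*e2 /\ q2 = m*(e2 + u*e1) - 2*x*e2 - 2*y*e1.
  by apply: (solve_uniq _ _ _ _ _ _ _ _ _ _ _ _ hA1' hA2') => //; rewrite /m /x /y; fld.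
subst q1 q2; rewrite /m /x /y; fld.
Qed.

Lemma psub_sh (X Y I : point R) : psub (psub X I) (psub Y I) = psub X Y.
Proof. by case: X => ? ?; case: Y => ? ?; case: I => ? ?; rewrite /psub /=; congr (_, _); ring. Qed.

Lemma psub_II (I : point R) : psub I I = (0,0).
Proof. by case: I => ? ?; rewrite /psub /= !subrr. Qed.

Lemma reflect_sh (O X I : point R) :
  psub (reflect_pt (psub O I) (psub I I)) (psub X I) = psub (reflect_pt O I) X.
Proof. by case: X => ? ?; case: O => ? ?; case: I => ? ?; rewrite /reflect_pt /pscale /psub /=; congr (_, _); ring. Qed.

Lemma key_gen (A B C I O HB HC OA : point R) :
  triangle A B C ->
  sqdist_line I A B = sqdist_line I C A ->
  sqdist_line I B C = sqdist_line I C A ->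
  is_circumcenter O A B C ->
  is_orthocenter HB C I A -> is_orthocenter HC A I B ->
  is_circumcenter OA A HB HC ->
  sqdist (reflect_pt O I) OA = sqdist (reflect_pt O I) I.
Proof.
have := key (psub A I) (psub B I) (psub C I) (psub O I) (psub HB I) (psub HC I) (psub OA I).
rewrite -(psub_II I) /is_circumcenter /is_orthocenter /triangle /sqdist_line /sqdist !psub_sh !reflect_sh.
exact.
Qed.

Lemma tri_rot (A B C : point R) : triangle A B C -> triangle B C A.
Proof.
case: A => ? ?; case: B => ? ?; case: C => ? ?; rewrite /triangle /cross /psub /= => h.
by apply: (neqk _ _ 1 h); ring.
Qed.

Lemma circ_rot (O A B C : point R) : is_circumcenter O A B C -> is_circumcenter O B C A.
Proof. by case=> hT h1 h2; split; [exact: tri_rot | exact: h2 | rewrite -h2 -h1]. Qed.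
End S.
Arguments key_gen {R A B C I O HB HC OA}.
Arguments tri_rot {R A B C}.
Arguments circ_rot {R O A B C}.

Theorem proposition5p5 (R : rcfType)
    (A B C I O HA HB HC OA OB OC : point R) :
  triangle A B C ->
  is_incenter I A B C ->
  is_circumcenter O A B C ->
  is_orthocenter HA B I C ->
  is_orthocenter HB C I A ->
  is_orthocenter HC A I B ->
  is_circumcenter OA A HB HC ->
  is_circumcenter OB B HC HA ->
  is_circumcenter OC C HA HB ->
  let P := reflect_pt O I in
  sqdist P OA = sqdist P OB /\ sqdist P OB = sqdist P OC.
Proof.
move=> hT [_ _ hi1 hi2] hO hHA hHB hHC hOA hOB hOC P.
have kA := key_gen hT (esym hi2) hi1 hO hHB hHC hOA.
have kB := key_gen (tri_rot hT) (etrans hi1 hi2) hi2 (circ_rot hO) hHC hHA hOB.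
have kC := key_gen (tri_rot (tri_rot hT)) (esym hi1) (esym (etrans hi1 hi2)) (circ_rot (circ_rot hO)) hHA hHB hOC.
by rewrite /P kA kB kC.
Qed.
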